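(* Let $U$ be a right strict binary search tree, let $x$ be a node that is the topmost node with its label, and suppose the right child $z$ of $x$ exists and is not the topmost node with its label. Then the label of $z$ is the least label occurring in $U$ that is strictly greater than the labels of all topmost nodes lying in the complete subtree at $x$.
   Context: A right strict binary search tree is a rooted binary tree (each node has a possibly empty left subtree and a possibly empty right subtree) whose nodes are labelled by elements of the totally ordered set $\{1<2<3<\cdots\}$ such that the label of each node is greater than or equal to the label of every node in its left subtree and strictly less than the label of every node in its right subtree. Labels may repeat. The complete subtree at a node $x$ consists of $x$ and all its descendants. All nodes with a given label $a$ are pairwise in ancestor–descendant relation, and the topmost node labelled $a$ is the node labelled $a$ that is an ancestor of all other nodes labelled $a$; a node is called topmost if it is the topmost node with its own label. *)

(* Defs.v *)
From mathcomp Require Import all_boot.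
Set Implicit Arguments. Unset Strict Implicit. Unset Printing Implicit Defensive.

Inductive tree := Leaf | Node of tree & nat & tree.

Fixpoint labels (t : tree) : seq nat :=
  match t with
  | Leaf => [::]
  | Node l a r => labels l ++ a :: labels r
  end.

Fixpoint rsbst (t : tree) : bool :=
  match t with
  | Leaf => true
  | Node l a r =>
      [&& 0 < a, all (fun b => b <= a) (labels l),
          all (fun b => a < b) (labels r), rsbst l & rsbst r]
  end.

(* Nodes are addressed by their path from the root:
   false = go to left child, true = go to right child. *)
Fixpoint subtree (t : tree) (p : seq bool) : tree :=
  match p with
  | [::] => t
  | b :: p' =>
      match t with
      | Leaf => Leaf
      | Node l _ r => subtree (if b then r else l) p'
      end
  end.

Definition label_at (t : tree) (p : seq bool) : option nat :=
  if subtree t p is Node _ a _ then Some a else None.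

(* The node at p is an ancestor (or equal) of the node at q iff p is a prefix of q. *)
Definition topmost (t : tree) (p : seq bool) : Prop :=
  exists a, label_at t p = Some a /\
            forall q, label_at t q = Some a -> prefix p q.

Definition above_topmost_in (t : tree) (x : seq bool) (c : nat) : Prop :=
  forall q b, topmost t (x ++ q) -> label_at t (x ++ q) = Some b -> b < c.

(* Main.v *)
Require Import Defs.
From mathcomp Require Import all_boot.
Set Implicit Arguments. Unset Strict Implicit.

Lemma la_cons l a r b s : label_at (Node l a r) (b :: s) = label_at (if b then r else l) s.
Proof. by []. Qed.
Lemma la_nil l a r : label_at (Node l a r) [::] = Some a.
Proof. by []. Qed.
Lemma la_leaf p : label_at Leaf p = None.
Proof. by case: p. Qed.

Lemma label_in t p c : label_at t p = Some c -> c \in labels t.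
Proof.
elim: t p => [|l IHl d r IHr] [|b p] //=; rewrite ?la_cons ?la_nil ?la_leaf /=.
- by case=> <-; rewrite mem_cat in_cons eqxx orbT.
- case: b => H; rewrite mem_cat in_cons.
  + by rewrite (IHr p) ?orbT.
  + by rewrite (IHl p).
Qed.

Lemma dir_lemma t p d b s e : rsbst t -> label_at t p = Some d ->
  label_at t (p ++ b :: s) = Some e -> if b then d < e else e <= d.
Proof.
elim: p t => [|b' p IH] [|l a r] //=; rewrite ?la_cons ?la_nil ?la_leaf /=.
- case/and5P=> _ Hl Hr _ _ [<-] H.
  case: b H => H.
  + exact: (allP Hr _ (label_in H)).
  + exact: (allP Hl _ (label_in H)).
- case/and5P=> _ _ _ Rl Rr; case: b' => H1 H2.
  + exact: (IH r Rr H1 H2).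
  + exact: (IH l Rl H1 H2).
Qed.

Lemma exists_top t c : rsbst t -> c \in labels t ->
  exists p, label_at t p = Some c /\ forall q, label_at t q = Some c -> prefix p q.
Proof.
elim: t => [|l IHl d r IHr] //= /and5P[_ Hl Hr Rl Rr].
rewrite mem_cat in_cons.
have [->|ncd] := eqVneq c d.
  by move=> _; exists [::]; split => // q _; rewrite prefix0s.
rewrite /= => /orP[cl|cr].
- have [p [Hp Hq]] := IHl Rl cl.
  exists (false :: p); split => // [[|[] q]] //; rewrite ?la_cons ?la_nil ?la_leaf /=.
  + by case=> E; rewrite E eqxx in ncd.
  + move=> H; have := label_in H => cr; move/allP: Hr => /(_ _ cr).
    by move/allP: Hl => /(_ _ cl) cd dc; have := leq_trans dc cd; rewrite ltnn.
  + by move=> H; rewrite ?prefix_cons ?eqxx /=; apply: Hq.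
- have [p [Hp Hq]] := IHr Rr cr.
  exists (true :: p); split => // [[|[] q]] //; rewrite ?la_cons ?la_nil ?la_leaf /=.
  + by case=> E; rewrite E eqxx in ncd.
  + by move=> H; rewrite ?prefix_cons ?eqxx /=; apply: Hq.
  + move=> H; have := label_in H => cl; move/allP: Hl => /(_ _ cl).
    by move/allP: Hr => /(_ _ cr) cd dc; have := leq_trans cd dc; rewrite ltnn.
Qed.

Lemma lemB t x a z p c : rsbst t -> label_at t x = Some a ->
  label_at t (rcons x true) = Some z -> label_at t p = Some c ->
  a < c -> c < z -> exists q, p = x ++ q.
Proof.
elim: t x p => [|l IHl d r IHr] x p; first by case: x.
move=> /andP[_ /and4P[Hl Hr Rl Rr]].
case: x => [|b x]; case: p => [|b' p]; rewrite /= ?la_cons ?la_nil /=.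
- by move=> [<-] _ [->]; rewrite ltnn.
- move=> [<-] _; case: b' => H.
  + by move=> _ _; exists (true :: p).
  + have cd := allP Hl _ (label_in H) => ac.
    by have := leq_trans ac cd; rewrite ltnn.
- case: b => Hx Hz [<-] ac cz.
  + have da := allP Hr _ (label_in Hx).
    by have := ltn_trans da ac; rewrite ltnn.
  + have zd := allP Hl _ (label_in Hz).
    by have := leq_ltn_trans zd cz; rewrite ltnn.
case: b b' => [] [] Hx Hz Hp ac cz.
- by have [q ->] := IHr x p Rr Hx Hz Hp ac cz; exists q.
- have cd := allP Hl _ (label_in Hp).
  have da := allP Hr _ (label_in Hx).
  by have := leq_ltn_trans cd (ltn_trans da ac); rewrite ltnn.
- have dc := allP Hr _ (label_in Hp).
  have zd := allP Hl _ (label_in Hz).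
  by have := leq_ltn_trans zd (ltn_trans dc cz); rewrite ltnn.
- by have [q ->] := IHl x p Rl Hx Hz Hp ac cz; exists q.
Qed.

Theorem mainTheorem20 (U : tree) (x : seq bool) (z : nat) :
  rsbst U ->
  topmost U x ->
  label_at U (rcons x true) = Some z ->
  ~ topmost U (rcons x true) ->
  [/\ z \in labels U,
      above_topmost_in U x z &
      forall c, c \in labels U -> above_topmost_in U x c -> z <= c].
Proof.
move=> R [a [Ha Htop]] Hz Hnt.
have zU := label_in Hz.
have az : a < z by have := dir_lemma (b:=true) (s:=[::]) R Ha; rewrite cats1; apply.
have [pz [Hpz Hpzt]] := exists_top R zU.
have Hpre := Hpzt _ Hz.
have [b0 [s0 Ex]] : exists b0 s0, x = pz ++ b0 :: s0.
  case/prefixP: Hpre => s Es.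
  case/lastP: s Es => [|s' e] Es.
    by exfalso; apply: Hnt; exists z; rewrite cats0 in Es; rewrite Es; split.
  rewrite -rcons_cat in Es; case/rcons_inj: Es => Ex _.
  case: s' Ex => [|b0 s0] Ex.
    by move: Ha; rewrite Ex cats0 Hpz => -[E]; rewrite E ltnn in az.
  by exists b0, s0.
have Hb0 : b0 = false.
  case: b0 Ex => // Ex.
  have := dir_lemma (b:=true) (s:=rcons s0 true) R Hpz.
  by rewrite -rcons_cons -rcons_cat -Ex => /(_ _ Hz); rewrite ltnn.
split => //.
- move=> q b [b' [Hb' Hbt]] Hb.
  rewrite Hb in Hb'; case: Hb' => Ebb; rewrite -Ebb in Hbt.
  have := dir_lemma (b:=false) (s:=s0 ++ q) R Hpz.
  rewrite -Hb0 -cat_cons catA -Ex => /(_ _ Hb).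
  rewrite leq_eqVlt => /orP[/eqP Ebz|] //.
  rewrite Ebz in Hbt; have := Hbt _ Hpz => /prefixP[s Es].
  have := congr1 size Es; rewrite Ex !size_cat /= => /eqP.
  by rewrite -!addnA -{1}(addn0 (size pz)) eqn_add2l addSn.
- move=> c cU Hab; rewrite leqNgt; apply/negP => cz.
  have ac : a < c by apply: (Hab [::] a); rewrite cats0 //; exists a.
  have [pc [Hpc Hpct]] := exists_top R cU.
  have [q Eq] := lemB R Ha Hz Hpc ac cz.
  have := Hab q c; rewrite -Eq => H.
  have : c < c by apply: H => //; exists c.
  by rewrite ltnn.
Qed.
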